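(* Let $x,h$ be real numbers with $0\le x<x+h<1$, and write $x=\sum_{k\ge1}2^{-k}\varepsilon_k$, $x+h=\sum_{k\ge1}2^{-k}\varepsilon'_k$ with $\varepsilon_k,\varepsilon'_k\in\{0,1\}$, where for dyadic rationals the expansion that is eventually all zeros is chosen. Let $p$ be the nonnegative integer with $2^{-p-1}<h\le 2^{-p}$, and let $k_0:=\max\{k:\varepsilon_1=\varepsilon'_1,\dots,\varepsilon_k=\varepsilon'_k\}$ (with $k_0=0$ if $\varepsilon_1\ne\varepsilon'_1$). Assume $k_0<p$. Then $$\sum_{k=p+1}^\infty 2^{-k}(1-\varepsilon_k-\varepsilon'_k)\le h.$$ Moreover, if $m\ge0$ is an integer with $\varepsilon_{p+m+1}=0$, then $$\sum_{k=p+1}^\infty 2^{-k}(1-\varepsilon_k-\varepsilon'_k)\ge -h(1-2^{-m}).$$ *)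

(* Defs.v *)
From Stdlib Require Import Reals ZArith.
From Coquelicot Require Import Coquelicot.
Open Scope R_scope.

(* k-th binary digit of x in [0,1): eps_k = floor(2^k x) mod 2.
   For dyadic rationals this yields the expansion that is eventually 0. *)
Definition bdigit (k : nat) (x : R) : R :=
  IZR (Z.modulo (Int_part (x * 2 ^ k)) 2).

(* Main.v *)
Require Import Defs.
From Stdlib Require Import Reals ZArith Lra Lia.
From Coquelicot Require Import Coquelicot.
Open Scope R_scope.

Lemma ip_spec r : IZR (Int_part r) <= r < IZR (Int_part r) + 1.
Proof. destruct (base_Int_part r); lra. Qed.

Lemma ip_char r z : IZR z <= r < IZR z + 1 -> Int_part r = z.
Proof.
  intros [H1 H2]. unfold Int_part.
  assert (z + 1 = up r)%Z.
  { apply tech_up; rewrite plus_IZR; lra. }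
  lia.
Qed.

Lemma ip_ge r z : IZR z <= r -> (z <= Int_part r)%Z.
Proof.
  intros H. destruct (ip_spec r).
  assert (IZR z < IZR (Int_part r + 1)) by (rewrite plus_IZR; lra).
  apply lt_IZR in H2. lia.
Qed.

Lemma half_pow n : (1/2)^n * 2^n = 1.
Proof. induction n; simpl; [lra|]. replace (1/2 * (1/2)^n * (2 * 2^n)) with ((1/2)^n*2^n) by field. exact IHn. Qed.

Lemma pow2_pos n : 0 < 2^n.
Proof. apply pow_lt; lra. Qed.

Lemma digit_eq k t :
  bdigit (S k) t = IZR (Int_part (t * 2^(S k))) - 2 * IZR (Int_part (t * 2^k)).
Proof.
  unfold bdigit. set (z := Int_part (t * 2^k)).
  destruct (ip_spec (t * 2^k)) as [H1 H2]. fold z in H1, H2.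
  replace (t * 2^(S k)) with (2 * (t * 2^k)) by (simpl; ring).
  destruct (Rlt_le_dec (t * 2^k) (IZR z + 1/2)).
  - rewrite (ip_char _ (2*z)%Z). 2:{ rewrite mult_IZR; lra. }
    rewrite mult_IZR. replace ((2*z) mod 2)%Z with 0%Z by (rewrite Z.mul_comm, Z_mod_mult; reflexivity). lra.
  - rewrite (ip_char _ (2*z+1)%Z). 2:{ rewrite plus_IZR, mult_IZR; lra. }
    rewrite plus_IZR, mult_IZR. replace ((2*z+1) mod 2)%Z with 1%Z.
    + lra.
    + rewrite Z.add_comm, Z.mul_comm, Z_mod_plus_full. reflexivity.
Qed.

Definition G (k : nat) (t : R) := IZR (Int_part (t * 2^k)) * (1/2)^k.

Lemma G_bounds k t : t - (1/2)^k < G k t <= t.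
Proof.
  unfold G. destruct (ip_spec (t*2^k)) as [H1 H2].
  pose proof (half_pow k). pose proof (pow2_pos k).
  assert (0 < (1/2)^k) by (apply pow_lt; lra).
  split.
  - replace t with (t*2^k*(1/2)^k) at 1 by (rewrite Rmult_assoc, (Rmult_comm (2^k)), H; ring).
    nra.
  - replace t with (t*2^k*(1/2)^k) at 2 by (rewrite Rmult_assoc, (Rmult_comm (2^k)), H; ring).
    nra.
Qed.

Lemma G_lim t : is_lim_seq (fun k => G k t) t.
Proof.
  apply is_lim_seq_le_le with (u := fun k => t - (1/2)^k) (w := fun _ => t).
  - intros n; pose proof (G_bounds n t); lra.
  - replace (Finite t) with (Finite (t - 0)) by (f_equal; ring).
    apply is_lim_seq_minus'. apply is_lim_seq_const. apply is_lim_seq_geom.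
    rewrite Rabs_pos_eq; lra.
  - apply is_lim_seq_const.
Qed.

Lemma term_eq k t : (1/2)^(S k) * bdigit (S k) t = G (S k) t - G k t.
Proof.
  rewrite digit_eq. unfold G. change ((1/2)^(S k)) with (1/2 * (1/2)^k). field.
Qed.

Lemma series_val (p : nat) (x y : R) :
  is_series (fun n : nat => (1/2) ^ (p + 1 + n) * (1 - bdigit (p + 1 + n) x - bdigit (p + 1 + n) y))
    ((1/2)^p - (x - G p x) - (y - G p y)).
Proof.
  set (v := fun n => G (p+n) x + G (p+n) y).
  assert (Hc : is_series (fun n => (1/2)^(p+1) * (1/2)^n) ((1/2)^p)).
  { replace ((1/2)^p) with (scal ((1/2)^(p+1)) (/ (1 - 1/2))).
    - apply (is_series_scal_l ((1/2)^(p+1)) (fun n => (1/2)^n)). apply is_series_geom.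
      rewrite Rabs_pos_eq; lra.
    - rewrite pow_add. unfold scal; simpl; unfold mult; simpl. field. }
  assert (Ht : is_series (fun n => v (S n) - v n) ((x + y) - v O)).
  { change (is_lim_seq (sum_n (fun n => v (S n) - v n)) ((x+y) - v O)).
    apply is_lim_seq_ext with (u := fun N => v (S N) - v O).
    - induction n. + rewrite sum_O. reflexivity.
      + rewrite sum_Sn, <- IHn. unfold plus; simpl. ring.
    - apply is_lim_seq_minus'. 2: apply is_lim_seq_const.
      unfold v. apply is_lim_seq_plus'.
      + apply is_lim_seq_ext with (u := fun n => G (n + S p) x).
        { intros n; f_equal; lia. }
        apply (is_lim_seq_incr_n (fun k => G k x) (S p)). apply G_lim.
      + apply is_lim_seq_ext with (u := fun n => G (n + S p) y).
        { intros n; f_equal; lia. }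
        apply (is_lim_seq_incr_n (fun k => G k y) (S p)). apply G_lim. }
  pose proof (is_series_minus _ _ _ _ Hc Ht) as H.
  replace ((1/2)^p - (x - G p x) - (y - G p y)) with (plus ((1 / 2) ^ p) (opp (x + y - v 0%nat))).
  2:{ unfold plus, opp, v; simpl. rewrite Nat.add_0_r. ring. }
  revert H. apply is_series_ext. intros n.
  unfold plus, opp, v; simpl.
  replace (p + 1 + n)%nat with (S (p + n)) by lia.
  rewrite Nat.add_succ_r.
  rewrite Rmult_minus_distr_l, Rmult_minus_distr_l, !term_eq.
  rewrite Nat.add_0_r, Nat.add_succ_r, <- pow_add. change (S p + n)%nat with (S (p+n)). ring.
Qed.

Lemma pow2_Z n : 2^n = IZR (2 ^ Z.of_nat n).
Proof. rewrite <- pow_IZR. reflexivity. Qed.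

Lemma floor_agree x y j p : x <= y -> (j <= p)%nat ->
  Int_part (x * 2^p) = Int_part (y * 2^p) -> Int_part (x * 2^j) = Int_part (y * 2^j).
Proof.
  intros Hxy Hjp Heq.
  set (K := (2 ^ Z.of_nat (p - j))%Z).
  assert (HK : 2^(p-j) = IZR K) by apply pow2_Z.
  assert (HKp : 0 < IZR K) by (rewrite <- HK; apply pow2_pos).
  assert (Hx : x * 2^p = x * 2^j * IZR K).
  { rewrite <- HK, Rmult_assoc, <- pow_add. f_equal. f_equal. lia. }
  assert (Hy : y * 2^p = y * 2^j * IZR K).
  { rewrite <- HK, Rmult_assoc, <- pow_add. f_equal. f_equal. lia. }
  set (T := Int_part (x * 2^j)).
  destruct (ip_spec (x*2^j)) as [T1 T2]. fold T in T1, T2.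
  set (A := Int_part (x * 2^p)).
  destruct (ip_spec (x*2^p)) as [A1 A2]. fold A in A1, A2.
  destruct (ip_spec (y*2^p)) as [B1 B2]. rewrite <- Heq in B1, B2. fold A in B1, B2.
  assert (H1 : (A + 1 <= (T + 1) * K)%Z).
  { assert (IZR A < IZR ((T+1)*K)).
    { rewrite mult_IZR, plus_IZR. rewrite Hx in A1. nra. }
    apply lt_IZR in H. lia. }
  apply IZR_le in H1. rewrite mult_IZR, !plus_IZR in H1.
  symmetry; apply ip_char. split.
  - assert (0 < 2^j) by apply pow2_pos. assert (x * 2^j <= y * 2^j) by (apply Rmult_le_compat_r; lra). lra.
  - rewrite Hy in B2. set (W := y * 2^j) in *. destruct (Rlt_le_dec W (IZR T + 1)); [lra|]. assert ((W - (IZR T + 1)) * IZR K >= 0) by (apply Rle_ge, Rmult_le_pos; lra). nra.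
Qed.

Theorem lemma1 (x h : R) (p k0 : nat)
  (hx0 : 0 <= x) (hh : 0 < h) (hx1 : x + h < 1)
  (hp : (1/2) ^ (p + 1) < h /\ h <= (1/2) ^ p)
  (hk0agree : forall j : nat, (1 <= j <= k0)%nat -> bdigit j x = bdigit j (x + h))
  (hk0diff : bdigit (k0 + 1) x <> bdigit (k0 + 1) (x + h))
  (hk0p : (k0 < p)%nat) :
  let S := Series (fun n : nat =>
             (1/2) ^ (p + 1 + n) *
             (1 - bdigit (p + 1 + n) x - bdigit (p + 1 + n) (x + h))) in
  S <= h /\
  (forall m : nat, bdigit (p + m + 1) x = 0 -> - h * (1 - (1/2) ^ m) <= S).
Proof.
  intros SS.
  assert (HS : SS = (1/2)^p - (x - G p x) - ((x+h) - G p (x+h))).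
  { apply is_series_unique, series_val. }
  set (P := 2^p) in *. set (q := (1/2)^p) in *.
  assert (HqP : q * P = 1) by apply half_pow.
  assert (HP : 0 < P) by apply pow2_pos.
  set (A := Int_part (x * P)). set (B := Int_part ((x+h) * P)).
  destruct (ip_spec (x*P)) as [A1 A2]. fold A in A1, A2.
  destruct (ip_spec ((x+h)*P)) as [B1 B2]. fold B in B1, B2.
  assert (HhP : h * P <= 1) by (rewrite <- HqP; apply Rmult_le_compat_r; lra).
  assert (HhP0 : 0 < h * P) by nra.
  assert (HY : (x+h)*P = x*P + h*P) by ring.
  assert (HAB1 : (A <= B)%Z) by (apply ip_ge; nra).
  assert (HAB2 : (B <= A + 1)%Z).
  { assert (IZR B < IZR (A + 2)) by (rewrite plus_IZR; lra). apply lt_IZR in H. lia. }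
  assert (HAB3 : A <> B).
  { intros E. apply hk0diff. unfold bdigit. f_equal. f_equal.
    apply floor_agree with p; [lra | lia | exact E]. }
  assert (HB : B = (A + 1)%Z) by lia.
  assert (HSP : SS * P = 2 + 2 * IZR A - 2 * (x * P) - h * P).
  { rewrite HS. unfold G. fold P q A B. rewrite HB, plus_IZR.
    transitivity ((q * P) * (2 + 2 * IZR A) - 2 * (x * P) - h * P); [ring|].
    rewrite HqP. ring. }
  rewrite HB, plus_IZR in B1, B2.
  split.
  - apply Rmult_le_reg_r with P; [exact HP|]. lra.
  - intros m Hm.
    rewrite Nat.add_1_r, digit_eq in Hm.
    set (C := Int_part (x * 2^(p+m))) in Hm.
    set (D := Int_part (x * 2^(S (p+m)))) in Hm.
    destruct (ip_spec (x * 2^(p+m))) as [C1 C2]. fold C in C1, C2.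
    destruct (ip_spec (x * 2^(S (p+m)))) as [D1 D2]. fold D in D1, D2.
    assert (HD : x * 2^(S (p+m)) = 2 * (x * 2^(p+m))) by (simpl; ring).
    set (Mz := (2 ^ Z.of_nat m)%Z).
    assert (HM : 2^m = IZR Mz) by apply pow2_Z.
    assert (HXM : x * 2^(p+m) = x * P * IZR Mz) by (rewrite <- HM; unfold P; rewrite pow_add; ring).
    assert (HMp : 0 < IZR Mz) by (rewrite <- HM; apply pow2_pos).
    set (r := (1/2)^m).
    assert (HrM : r * IZR Mz = 1) by (rewrite <- HM; apply half_pow).
    assert (Hhalf : x * 2^(p+m) < IZR C + 1/2) by lra.
    assert (HC : (C + 1 <= (A + 1) * Mz)%Z).
    { assert (IZR C < IZR ((A+1)*Mz)).
      { rewrite mult_IZR, plus_IZR. rewrite HXM in C1. nra. }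
      apply lt_IZR in H. lia. }
    apply IZR_le in HC. rewrite mult_IZR, !plus_IZR in HC.
    rewrite HXM in Hhalf.
    set (X := x * P) in *. set (H := h * P) in *.
    assert (HX : X < IZR A + 1 - r / 2).
    { assert (X * IZR Mz < (IZR A + 1) * IZR Mz - 1/2) by lra.
      assert (X * IZR Mz * r < ((IZR A + 1) * IZR Mz - 1/2) * r).
      { apply Rmult_lt_compat_r; [|exact H0]. unfold r; apply pow_lt; lra. }
      replace (X * IZR Mz * r) with X in H1 by (transitivity (X * (r * IZR Mz)); [rewrite HrM; ring | ring]).
      replace (((IZR A + 1) * IZR Mz - 1/2) * r) with ((IZR A + 1) * (r * IZR Mz) - r/2) in H1 by field.
      rewrite HrM in H1. lra. }
    assert (Hr : 0 < r) by (unfold r; apply pow_lt; lra).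
    apply Rmult_le_reg_r with P; [exact HP|].
    rewrite HSP. fold X H.
    replace (- h * (1 - r) * P) with (- H + H * r) by (unfold H; ring).
    assert (H * r <= r) by nra. lra.
Qed.
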